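(* Fix $c\neq0$. For $m\in[0,1)$, the cnoidal profile $p_{m,V}$ has zero average, $\int_0^{2\pi}p_{m,V}(x)\,dx=0$, if and only if $V=V_0(m):=\frac{2E(m)}{K(m)}-\frac{4-2m}{3}$. Let $m^*\in(0,1)$ be the solution of $E(m^* )/K(m^* )=\frac12$ ($m^*\approx0.8261$). Then the point $(m,V_0(m))$ satisfies $V_0(m)>-\frac{m+1}{3}$ for all $m\in[0,1)$, $V_0(m)=\frac{2m-1}{3}$ exactly when $m=m^*$, and $V_0(m)<\frac{2m-1}{3}$ (so that $(m,V_0(m))$ lies in the region $-\frac{m+1}{3}<V<\frac{2m-1}{3}$, where the profile is not Virasoro-conjugate to any constant) for $m\in(m^*,1)$.
   Context: $K(m)=\int_0^{\pi/2}(1-m\sin^2\theta)^{-1/2}d\theta$ and $E(m)=\int_0^{\pi/2}(1-m\sin^2\theta)^{1/2}d\theta$ are the complete elliptic integrals of the first and second kind. The cnoidal profile is $p_{m,V}(x)=\frac{cK(m)^2}{3\pi^2}\big[\frac V2-\frac{m+1}3+m\,\mathrm{sn}^2(\frac{K(m)}{\pi}x|m)\big]$ with $\mathrm{sn}(\cdot|m)$ the Jacobi elliptic sine. A $2\pi$-periodic profile $p$ is Virasoro-conjugate to a constant $k$ if $p=f\cdot k$ for some smooth $f:\mathbb{R}\to\mathbb{R}$ with $f'>0$ and $f(x+2\pi)=f(x)+2\pi$, where $(f\cdot q)(f(x))=f'(x)^{-2}[q(x)+\frac c{12}\mathsf{S}[f](x)]$ and $\mathsf{S}[f]=\frac{f'''}{f'}-\frac32(\frac{f''}{f'})^2$.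 *)

(* Defs.v *)
From Stdlib Require Import Reals ClassicalEpsilon.
From Coquelicot Require Import Coquelicot.
Open Scope R_scope.

Definition ellK (m : R) : R :=
  RInt (fun t => / sqrt (1 - m * (sin t) ^ 2)) 0 (PI / 2).

Definition ellE (m : R) : R :=
  RInt (fun t => sqrt (1 - m * (sin t) ^ 2)) 0 (PI / 2).

Definition ellF (phi m : R) : R :=
  RInt (fun t => / sqrt (1 - m * (sin t) ^ 2)) 0 phi.

(* Jacobi amplitude am(u|m): the phi with F(phi|m) = u (unique for m < 1,
   since F(.|m) is then a strictly increasing bijection of R). *)
Definition jacobi_am (u m : R) : R :=
  epsilon (inhabits 0) (fun phi => ellF phi m = u).

Definition jacobi_sn (u m : R) : R := sin (jacobi_am u m).

Definition cnoidal (c m V x : R) : R :=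
  c * (ellK m) ^ 2 / (3 * PI ^ 2) *
  (V / 2 - (m + 1) / 3 + m * (jacobi_sn (ellK m / PI * x) m) ^ 2).

Definition V0 (m : R) : R := 2 * ellE m / ellK m - (4 - 2 * m) / 3.

(* Main.v *)
Require Import Defs.
From Stdlib Require Import Reals Lra Psatz ClassicalEpsilon.
From Coquelicot Require Import Coquelicot.
Open Scope R_scope.

Definition fK (m t : R) : R := / sqrt (1 - m * (sin t) ^ 2).
Definition fE (m t : R) : R := sqrt (1 - m * (sin t) ^ 2).

Lemma sin2_01 t : 0 <= sin t ^ 2 <= 1.
Proof. pose proof (SIN_bound t). split; nra. Qed.

Lemma arg_pos m t : m < 1 -> 0 < 1 - m * sin t ^ 2.
Proof. intros. pose proof (sin2_01 t). destruct (Rle_dec 0 m); nra. Qed.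

Lemma fK_cont m t : m < 1 -> continuous (fK m) t.
Proof.
  intros Hm. apply (ex_derive_continuous (V:=R_NormedModule)). unfold fK.
  pose proof (arg_pos m t Hm). auto_derive.
  split; [lra|]. split; [|exact I]. apply Rgt_not_eq, sqrt_lt_R0. lra.
Qed.

Lemma fE_cont m t : m < 1 -> continuous (fE m) t.
Proof.
  intros Hm. apply (ex_derive_continuous (V:=R_NormedModule)). unfold fE.
  pose proof (arg_pos m t Hm). auto_derive. lra.
Qed.

Lemma fK_ge1 m t : 0 <= m < 1 -> 1 <= fK m t.
Proof.
  intros Hm. pose proof (arg_pos m t (proj2 Hm)). pose proof (sin2_01 t).
  unfold fK. set (s := sqrt _).
  assert (0 < s) by (apply sqrt_lt_R0; lra).
  assert (s <= 1) by (unfold s; apply Rle_trans with (sqrt 1); [apply sqrt_le_1_alt; destruct Hm; nra | rewrite sqrt_1; lra]).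
  apply (Rmult_le_reg_l s); [lra|]. rewrite Rinv_r; lra.
Qed.
Lemma exK m a b : m < 1 -> ex_RInt (fK m) a b.
Proof. intros H. apply (ex_RInt_continuous (V:=R_CompleteNormedModule)). intros z _. apply fK_cont. exact H. Qed.
Lemma exE m a b : m < 1 -> ex_RInt (fE m) a b.
Proof. intros H. apply (ex_RInt_continuous (V:=R_CompleteNormedModule)). intros z _. apply fE_cont. exact H. Qed.

Lemma ellF_eq phi m : ellF phi m = RInt (fK m) 0 phi.
Proof. reflexivity. Qed.

Lemma ellF_derive m x : m < 1 -> is_derive (fun phi => ellF phi m) x (fK m x).
Proof.
  intros Hm. apply (is_derive_RInt (fK m) (fun phi => RInt (fK m) 0 phi) 0 x).
  apply filter_forall. intros. apply (RInt_correct (V:=R_CompleteNormedModule)), exK; auto.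
  apply fK_cont; auto.
Qed.

Lemma ellF_continuity m : m < 1 -> continuity (fun phi => ellF phi m).
Proof.
  intros Hm x. apply continuity_pt_filterlim.
  apply (ex_derive_continuous (V:=R_NormedModule) (fun phi => ellF phi m)).
  eexists. apply ellF_derive; auto.
Qed.

Lemma ellF_diff m a b : 0 <= m < 1 -> a <= b -> b - a <= ellF b m - ellF a m.
Proof.
  intros Hm Hab.
  assert (Hc : ellF a m + RInt (fK m) a b = ellF b m)
    by (apply (RInt_Chasles (V:=R_CompleteNormedModule)); apply exK; lra).
  assert (H1 : RInt (fun _ => 1) a b <= RInt (fK m) a b).
  { apply RInt_le; auto. apply ex_RInt_const. apply exK; lra.
    intros; apply fK_ge1; auto. }
  rewrite RInt_const in H1. change (scal (b-a) 1) with ((b-a)*1) in H1. lra.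
Qed.

Lemma ellF_0 m : ellF 0 m = 0.
Proof. unfold ellF. apply (RInt_point (V:=R_CompleteNormedModule)). Qed.

Lemma ellF_surj m u : 0 <= m < 1 -> exists phi, ellF phi m = u.
Proof.
  intros Hm.
  pose proof (ellF_diff m 0 (Rabs u) Hm (Rabs_pos u)) as H1.
  pose proof (ellF_diff m (- Rabs u) 0 Hm) as H2.
  rewrite ellF_0 in H1, H2.
  assert (H2' : 0 - - Rabs u <= 0 - ellF (- Rabs u) m) by (apply H2; pose proof (Rabs_pos u); lra).
  destruct (IVT_gen (fun phi => ellF phi m) (- Rabs u) (Rabs u) u (ellF_continuity m (proj2 Hm))) as [x [_ Hx]].
  - pose proof (Rle_abs u). pose proof (Rabs_maj2 u).
    unfold Rmin, Rmax; destruct Rle_dec; lra.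
  - exists x; exact Hx.
Qed.

Lemma am_spec u m : 0 <= m < 1 -> ellF (jacobi_am u m) m = u.
Proof.
  intros Hm. unfold jacobi_am. apply (epsilon_spec (inhabits 0) (fun phi => ellF phi m = u)).
  apply ellF_surj; auto.
Qed.

Lemma ellF_lip m a b : 0 <= m < 1 -> Rabs (a - b) <= Rabs (ellF a m - ellF b m).
Proof.
  intros Hm. destruct (Rle_dec a b).
  - pose proof (ellF_diff m a b Hm r). rewrite (Rabs_left1 (a - b)) by lra.
    rewrite Rabs_left1 by lra. lra.
  - pose proof (ellF_diff m b a Hm ltac:(lra)). rewrite (Rabs_right (a - b)) by lra.
    rewrite Rabs_right by lra. lra.
Qed.

Lemma am_F phi m : 0 <= m < 1 -> jacobi_am (ellF phi m) m = phi.
Proof.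
  intros Hm. pose proof (ellF_lip m (jacobi_am (ellF phi m) m) phi Hm).
  rewrite am_spec in H by auto. rewrite Rminus_diag, Rabs_R0 in H.
  pose proof (Rabs_pos (jacobi_am (ellF phi m) m - phi)).
  assert (Rabs (jacobi_am (ellF phi m) m - phi) = 0) by lra.
  apply Rabs_eq_0 in H1. lra.
Qed.

Lemma am_lip m u v : 0 <= m < 1 -> Rabs (jacobi_am u m - jacobi_am v m) <= Rabs (u - v).
Proof.
  intros Hm. pose proof (ellF_lip m (jacobi_am u m) (jacobi_am v m) Hm).
  rewrite !am_spec in H by auto. exact H.
Qed.

Lemma am_cont m u : 0 <= m < 1 -> continuous (fun u => jacobi_am u m) u.
Proof.
  intros Hm. apply continuity_pt_filterlim.
  intros eps Heps. exists eps; split; auto. intros x [_ Hx].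
  simpl in *. unfold R_dist in *. eapply Rle_lt_trans; [apply am_lip; auto|]; exact Hx.
Qed.

Lemma exc (h : R -> R) a b : (forall t, continuous h t) -> ex_RInt h a b.
Proof. intros H. apply (ex_RInt_continuous (V:=R_CompleteNormedModule)). intros z _. apply H. Qed.

Lemma RInt_sym (h : R -> R) : (forall t, h (PI - t) = h t) -> (forall t, continuous h t) ->
  RInt h 0 PI = 2 * RInt h 0 (PI/2).
Proof.
  intros Hs Hc.
  assert (H1 : RInt h 0 (PI/2) + RInt h (PI/2) PI = RInt h 0 PI)
    by (apply (RInt_Chasles (V:=R_CompleteNormedModule)); apply exc; auto).
  assert (H2 : RInt (fun y => scal (-1) (h (-1 * y + PI))) (PI/2) PI = RInt h (-1*(PI/2)+PI) (-1*PI+PI))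
    by (apply (RInt_comp_lin (V:=R_CompleteNormedModule)); apply exc; auto).
  assert (H3 : RInt (fun y => scal (-1) (h (-1 * y + PI))) (PI/2) PI = -1 * RInt h (PI/2) PI).
  { transitivity (RInt (fun y => scal (-1) (h y)) (PI/2) PI).
    apply RInt_ext. intros x _. f_equal. rewrite <- (Hs x). f_equal. ring.
    apply (RInt_scal (V:=R_CompleteNormedModule)). apply exc; auto. }
  assert (H4 : RInt h (-1*(PI/2)+PI) (-1*PI+PI) = - RInt h 0 (PI/2)).
  { replace (-1*(PI/2)+PI) with (PI/2) by field. replace (-1*PI+PI) with 0 by ring.
    symmetry. apply (opp_RInt_swap (V:=R_CompleteNormedModule)). apply exc; auto. }
  lra.
Qed.

Lemma fK_sym m t : fK m (PI - t) = fK m t.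
Proof. unfold fK. rewrite sin_PI_x. reflexivity. Qed.
Lemma fE_sym m t : fE m (PI - t) = fE m t.
Proof. unfold fE. rewrite sin_PI_x. reflexivity. Qed.

Lemma ellF_PI m : m < 1 -> ellF PI m = 2 * ellK m.
Proof. intros. apply (RInt_sym (fK m)). apply fK_sym. intros; apply fK_cont; auto. Qed.

Lemma E_PI m : m < 1 -> RInt (fE m) 0 PI = 2 * ellE m.
Proof. intros. apply (RInt_sym (fE m)). apply fE_sym. intros; apply fE_cont; auto. Qed.

Lemma minusR (a b : R) : minus a b = a - b.
Proof. reflexivity. Qed.

Definition gs (m u : R) : R := sin (jacobi_am u m) ^ 2.

Lemma gs_cont m u : 0 <= m < 1 -> continuous (gs m) u.
Proof.
  intros Hm. unfold gs.
  apply (continuous_comp (fun u => jacobi_am u m) (fun x => sin x ^ 2)).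
  apply am_cont; auto.
  apply (ex_derive_continuous (V:=R_NormedModule)). auto_derive. exact I.
Qed.

Lemma ellK_pos m : 0 <= m < 1 -> PI / 2 <= ellK m.
Proof.
  intros Hm. pose proof (ellF_diff m 0 (PI/2) Hm). rewrite ellF_0 in H.
  change (ellK m) with (ellF (PI/2) m). pose proof PI_RGT_0. lra.
Qed.

Lemma G_val m : 0 <= m < 1 -> m * RInt (gs m) 0 (2 * ellK m) = 2 * ellK m - 2 * ellE m.
Proof.
  intros Hm.
  assert (H1 : RInt (fun y => scal (fK m y) (gs m (ellF y m))) 0 PI = RInt (gs m) (ellF 0 m) (ellF PI m)).
  { apply (RInt_comp (V:=R_CompleteNormedModule) (gs m) (fun phi => ellF phi m) (fK m) 0 PI).
    intros; apply gs_cont; auto.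
    intros; split. apply ellF_derive; lra. apply fK_cont; lra. }
  rewrite (ellF_0 m) in H1. rewrite (ellF_PI m) in H1 by lra.
  rewrite <- H1.
  assert (H0 : RInt (fun y => scal (fK m y) (gs m (ellF y m))) 0 PI = RInt (fun y => fK m y * sin y ^ 2) 0 PI).
  { apply RInt_ext. intros x _. unfold gs. rewrite am_F by lra. reflexivity. }
  rewrite H0.
  assert (H2 : RInt (fun y => scal m (fK m y * sin y ^ 2)) 0 PI
               = scal m (RInt (fun y => fK m y * sin y ^ 2) 0 PI)).
  { apply (RInt_scal (V:=R_CompleteNormedModule)).
    apply exc. intros z.
    apply (ex_derive_continuous (V:=R_NormedModule)). unfold fK.
    pose proof (arg_pos m z (proj2 Hm)). auto_derive.
    split; [lra|]. split; [|exact I]. apply Rgt_not_eq, sqrt_lt_R0. lra. }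
  change (scal m ?x) with (m * x) in H2. rewrite <- H2.
  transitivity (ellF PI m - RInt (fE m) 0 PI); [| rewrite ellF_PI, E_PI by lra; ring].
  assert (Hmi : RInt (fun t => minus (fK m t) (fE m t)) 0 PI = minus (RInt (fK m) 0 PI) (RInt (fE m) 0 PI))
    by (apply (RInt_minus (V:=R_CompleteNormedModule)); [apply exK | apply exE]; lra).
  rewrite minusR in Hmi. change (RInt (fK m) 0 PI) with (ellF PI m) in Hmi. rewrite <- Hmi.
  apply RInt_ext. intros x _. match goal with |- ?a = ?b => change (@eq R a b) end.
  change (scal ?a ?b) with (a * b). change (minus ?a ?b) with (a - b).
  unfold fK, fE. pose proof (arg_pos m x (proj2 Hm)).
  assert (0 < sqrt (1 - m * sin x ^ 2)) by (apply sqrt_lt_R0; lra).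
  pose proof (sqrt_sqrt (1 - m * sin x ^ 2) ltac:(lra)) as Hss.
  set (s := sqrt _) in *. replace (/ s - s) with ((1 - s * s) * / s) by (field; lra). rewrite Hss. ring.
Qed.

Lemma int_cnoidal c m V : 0 <= m < 1 ->
  RInt (fun x => cnoidal c m V x) 0 (2 * PI) =
  c * ellK m ^ 2 / (3 * PI ^ 2) * (2 * PI) * (V / 2 - (m + 1) / 3 + 1 - ellE m / ellK m).
Proof.
  intros Hm. pose proof (ellK_pos m Hm) as HK. pose proof PI_RGT_0 as Hpi.
  set (K := ellK m) in *. set (A := c * K ^ 2 / (3 * PI ^ 2)). set (B := V / 2 - (m + 1) / 3).
  set (h := fun x => gs m (K / PI * x + 0)).
  assert (Hhc : forall x, continuous h x).
  { intros x. unfold h.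
    apply (continuous_comp (fun x => K / PI * x + 0) (gs m)).
    apply (ex_derive_continuous (V:=R_NormedModule)). auto_derive. exact I.
    apply gs_cont; auto. }
  assert (Hext : RInt (fun x => cnoidal c m V x) 0 (2 * PI) =
                 RInt (fun x => plus (A * B) (scal (A * m) (h x))) 0 (2 * PI)).
  { apply RInt_ext. intros x _. match goal with |- ?a = ?b => change (@eq R a b) end.
    unfold cnoidal, jacobi_sn, h, gs, A, B, K. change (plus ?a ?b) with (a + b).
    change (scal ?a ?b) with (a * b). rewrite Rplus_0_r. ring. }
  assert (Hp : RInt (fun x => plus (A * B) (scal (A * m) (h x))) 0 (2 * PI) =
               plus (RInt (fun _ => A * B) 0 (2 * PI)) (RInt (fun x => scal (A * m) (h x)) 0 (2 * PI))).
  { apply (RInt_plus (V:=R_CompleteNormedModule)). apply ex_RInt_const.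
    apply (ex_RInt_scal (V:=R_CompleteNormedModule)). apply exc; auto. }
  assert (Hs : RInt (fun x => scal (A * m) (h x)) 0 (2 * PI) = scal (A * m) (RInt h 0 (2 * PI))).
  { apply (RInt_scal (V:=R_CompleteNormedModule)). apply exc; auto. }
  assert (Hs2 : RInt (fun x => scal (K / PI) (h x)) 0 (2 * PI) = scal (K / PI) (RInt h 0 (2 * PI))).
  { apply (RInt_scal (V:=R_CompleteNormedModule)). apply exc; auto. }
  assert (Hl : RInt (fun y => scal (K / PI) (gs m (K / PI * y + 0))) 0 (2 * PI)
               = RInt (gs m) (K / PI * 0 + 0) (K / PI * (2 * PI) + 0)).
  { apply (RInt_comp_lin (V:=R_CompleteNormedModule)). apply exc. intros; apply gs_cont; auto. }
  replace (K / PI * 0 + 0) with 0 in Hl by ring.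
  replace (K / PI * (2 * PI) + 0) with (2 * K) in Hl by (field; lra).
  pose proof (G_val m Hm) as HG. fold K in HG.
  rewrite RInt_const in Hp.
  change (scal ?a ?b) with (a * b) in *. change (plus ?a ?b) with (a + b) in *.
  fold h in Hl.
  rewrite Hext, Hp, Hs.
  assert (Hl2 : RInt (fun x => K / PI * h x) 0 (2 * PI) = RInt (gs m) 0 (2 * K)) by exact Hl.   assert (Hh : RInt h 0 (2 * PI) * (K / PI) = RInt (gs m) 0 (2 * K)) by lra.
  assert (Hh2 : m * RInt h 0 (2 * PI) = (2 * K - 2 * ellE m) * (PI / K)).
  { rewrite <- HG, <- Hh. field. lra. }
  match goal with |- ?a = ?b => change (@eq R a b) end.   transitivity (A * (2 * PI - 0) * B + A * (m * RInt h 0 (2 * PI))); [ring|].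
  rewrite Hh2. unfold B. field. lra.
Qed.

Lemma part1 c m V : c <> 0 -> 0 <= m < 1 ->
  (RInt (fun x => cnoidal c m V x) 0 (2 * PI) = 0 <-> V = V0 m).
Proof.
  intros Hc Hm. rewrite int_cnoidal by auto.
  pose proof (ellK_pos m Hm) as HK. pose proof PI_RGT_0 as Hpi.
  assert (Hne : c * ellK m ^ 2 / (3 * PI ^ 2) * (2 * PI) <> 0).
  { assert (Hq : 0 < ellK m ^ 2 / (3 * PI ^ 2) * (2 * PI)).
    { apply Rmult_lt_0_compat; [|lra]. apply Rdiv_lt_0_compat. simpl; nra. simpl; nra. }
    replace (c * ellK m ^ 2 / (3 * PI ^ 2) * (2 * PI)) with (c * (ellK m ^ 2 / (3 * PI ^ 2) * (2 * PI))) by (unfold Rdiv; ring).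
    apply Rmult_integral_contrapositive_currified; lra. }
  unfold V0. replace (2 * ellE m / ellK m) with (2 * (ellE m / ellK m)) by (field; lra).
  split.
  - intros H. apply Rmult_integral in H. destruct H; [contradiction|lra].
  - intros H. rewrite H. match goal with |- ?a = ?b => change (@eq R a b) end. set (q := ellE m / ellK m). field; lra.
Qed.

Lemma fE_mono m1 m2 t : m1 < m2 < 1 -> 0 < sin t -> fE m2 t < fE m1 t.
Proof.
  intros Hm Hs. unfold fE. apply sqrt_lt_1_alt. pose proof (arg_pos m2 t (proj2 Hm)).
  split; [lra|]. assert (0 < sin t ^ 2) by (simpl; nra). nra.
Qed.

Lemma fK_mono m1 m2 t : m1 <= m2 < 1 -> fK m1 t <= fK m2 t.
Proof.
  intros Hm. unfold fK. pose proof (arg_pos m2 t (proj2 Hm)).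
  apply Rinv_le_contravar. apply sqrt_lt_R0; lra.
  apply sqrt_le_1_alt. pose proof (sin2_01 t). nra.
Qed.

Lemma E_lt m1 m2 : m1 < m2 < 1 -> ellE m2 < ellE m1.
Proof.
  intros Hm. apply (RInt_lt (fE m2) (fE m1)). pose proof PI_RGT_0; lra.
  intros; apply fE_cont; lra. intros; apply fE_cont; lra.
  intros x Hx. apply fE_mono; auto. apply sin_gt_0; lra.
Qed.

Lemma K_le m1 m2 : m1 <= m2 < 1 -> ellK m1 <= ellK m2.
Proof.
  intros Hm. apply RInt_le. pose proof PI_RGT_0; lra. apply exK; lra. apply exK; lra.
  intros; apply fK_mono; auto.
Qed.

Lemma E_ge0 m : m < 1 -> 0 <= ellE m.
Proof.
  intros Hm. apply RInt_ge_0. pose proof PI_RGT_0; lra. apply exE; lra.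
  intros; unfold fE; apply sqrt_pos.
Qed.

Definition ratio m := ellE m / ellK m.

Lemma ratio_dec m1 m2 : 0 <= m1 < m2 -> m2 < 1 -> ratio m2 < ratio m1.
Proof.
  intros H1 H2. unfold ratio.
  pose proof (E_lt m1 m2 ltac:(lra)). pose proof (K_le m1 m2 ltac:(lra)).
  pose proof (ellK_pos m1 ltac:(lra)). pose proof (E_ge0 m1 ltac:(lra)). pose proof PI_RGT_0.
  apply Rlt_le_trans with (ellE m1 / ellK m2).
  apply Rmult_lt_compat_r; auto. apply Rinv_0_lt_compat; lra.
  unfold Rdiv. apply Rmult_le_compat_l; auto. apply Rinv_le_contravar; lra.
Qed.

Lemma ratio0 : ratio 0 = 1.
Proof.
  unfold ratio, ellE, ellK.
  rewrite (RInt_ext _ (fun _ => 1)), (RInt_ext (fun t => / _) (fun _ => 1)).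
  rewrite RInt_const. change (scal ?a ?b) with (a * b). pose proof PI_RGT_0. field. lra.
  intros; rewrite Rmult_0_l, Rminus_0_r, sqrt_1; apply Rinv_1.
  intros; rewrite Rmult_0_l, Rminus_0_r, sqrt_1; reflexivity.
Qed.

Lemma V0_gt m : 0 <= m < 1 -> V0 m > - (m + 1) / 3.
Proof.
  intros Hm. pose proof (ellK_pos m Hm). pose proof PI_RGT_0.
  assert (H1 : RInt (fun t => (1 - m) * fK m t) 0 (PI/2) < RInt (fun t => 2 * fE m t) 0 (PI/2)).
  { apply RInt_lt. lra.
    intros. apply (ex_derive_continuous (V:=R_NormedModule)). unfold fE.
    pose proof (arg_pos m x (proj2 Hm)). auto_derive. lra.
    intros. apply (ex_derive_continuous (V:=R_NormedModule)). unfold fK.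
    pose proof (arg_pos m x (proj2 Hm)). auto_derive.
    split; [lra|]. split; [|exact I]. apply Rgt_not_eq, sqrt_lt_R0. lra.
    intros t _. unfold fK, fE. pose proof (arg_pos m t (proj2 Hm)). pose proof (sin2_01 t).
    assert (0 < sqrt (1 - m * sin t ^ 2)) by (apply sqrt_lt_R0; lra).
    pose proof (sqrt_sqrt (1 - m * sin t ^ 2) ltac:(lra)) as Hss.
    set (s := sqrt _) in *.
    apply (Rmult_lt_reg_r s); [lra|]. rewrite Rmult_assoc, Rinv_l by lra. nra. }
  rewrite (RInt_scal (V:=R_CompleteNormedModule) (fK m)) in H1 by (apply exK; lra).
  rewrite (RInt_scal (V:=R_CompleteNormedModule) (fE m)) in H1 by (apply exE; lra).
  change (scal ?a ?b) with (a * b) in H1. fold (ellK m) (ellE m) in H1.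
  unfold V0.
  apply Rlt_gt. apply (Rmult_lt_reg_r (ellK m)); [lra|].
  unfold Rdiv. field_simplify; try lra. change (RInt (fK m) 0 (PI/2)) with (ellK m) in H1. change (RInt (fE m) 0 (PI/2)) with (ellE m) in H1. nra.
Qed.
Lemma sq_lip sa sb ya yb d : 0 < d -> d <= sa -> d <= sb -> sa * sa = ya -> sb * sb = yb ->
  Rabs (sa - sb) <= Rabs (ya - yb) / (2 * d).
Proof.
  intros Hd Ha Hb Hya Hyb.
  assert (E : Rabs (ya - yb) = Rabs (sa - sb) * (sa + sb)).
  { rewrite <- (Rabs_right (sa + sb)) by lra. rewrite <- Rabs_mult. f_equal. subst; ring. }
  rewrite E. pose proof (Rabs_pos (sa - sb)).
  apply (Rmult_le_reg_r (2 * d)); [lra|]. unfold Rdiv. rewrite Rmult_assoc, Rinv_l by lra. nra.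
Qed.

Lemma inv_lip sa sb ya yb d : 0 < d -> d <= sa -> d <= sb -> sa * sa = ya -> sb * sb = yb ->
  Rabs (/ sa - / sb) <= Rabs (ya - yb) / (2 * d ^ 3).
Proof.
  intros Hd Ha Hb Hya Hyb.
  pose proof (sq_lip sa sb ya yb d Hd Ha Hb Hya Hyb) as H.
  assert (E : / sa - / sb = (sb - sa) * / (sa * sb)) by (field; lra).
  rewrite E, Rabs_mult, (Rabs_right (/ (sa * sb))) by (apply Rle_ge, Rlt_le, Rinv_0_lt_compat; nra).
  rewrite <- Rabs_Ropp, Ropp_minus_distr.
  assert (Hi : / (sa * sb) <= / (d * d)) by (apply Rinv_le_contravar; nra).
  apply Rle_trans with (Rabs (sa - sb) * / (d * d)).
  apply Rmult_le_compat_l; [apply Rabs_pos | exact Hi].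
  apply Rle_trans with (Rabs (ya - yb) / (2 * d) * / (d * d)).
  apply Rmult_le_compat_r; [apply Rlt_le, Rinv_0_lt_compat; nra | exact H].
  right. field. lra.
Qed.

Definition Mx := 9999 / 10000.

Lemma s_low a t : a <= Mx -> 1 / 100 <= sqrt (1 - a * sin t ^ 2).
Proof.
  intros Ha. unfold Mx in Ha. pose proof (sin2_01 t).
  assert (Hy : 1 / 10000 <= 1 - a * sin t ^ 2) by (destruct (Rle_dec 0 a); nra).
  pose proof (sqrt_sqrt (1 - a * sin t ^ 2) ltac:(lra)). pose proof (sqrt_pos (1 - a * sin t ^ 2)).
  nra.
Qed.

Lemma y_diff a b t : Rabs ((1 - a * sin t ^ 2) - (1 - b * sin t ^ 2)) <= Rabs (a - b).
Proof.
  replace ((1 - a * sin t ^ 2) - (1 - b * sin t ^ 2)) with ((a - b) * (- sin t ^ 2)) by ring.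
  rewrite Rabs_mult. pose proof (sin2_01 t). rewrite (Rabs_left1 (- sin t ^ 2)) by lra.
  pose proof (Rabs_pos (a - b)). nra.
Qed.

Lemma fE_lip a b t : a <= Mx -> b <= Mx -> Rabs (fE a t - fE b t) <= 50 * Rabs (a - b).
Proof.
  intros Ha Hb. unfold fE.
  pose proof (arg_pos a t ltac:(unfold Mx in Ha; lra)). pose proof (arg_pos b t ltac:(unfold Mx in Hb; lra)).
  eapply Rle_trans. apply (sq_lip (sqrt (1 - a * sin t ^ 2)) (sqrt (1 - b * sin t ^ 2)) (1 - a * sin t ^ 2) (1 - b * sin t ^ 2) (1/100)); try lra; try apply s_low; auto; apply sqrt_sqrt; lra.
  pose proof (y_diff a b t). lra.
Qed.

Lemma fK_lip a b t : a <= Mx -> b <= Mx -> Rabs (fK a t - fK b t) <= 500000 * Rabs (a - b).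
Proof.
  intros Ha Hb. unfold fK.
  pose proof (arg_pos a t ltac:(unfold Mx in Ha; lra)). pose proof (arg_pos b t ltac:(unfold Mx in Hb; lra)).
  eapply Rle_trans. apply (inv_lip (sqrt (1 - a * sin t ^ 2)) (sqrt (1 - b * sin t ^ 2)) (1 - a * sin t ^ 2) (1 - b * sin t ^ 2) (1/100)); try lra; try apply s_low; auto; apply sqrt_sqrt; lra.
  pose proof (y_diff a b t). replace (2 * (1 / 100) ^ 3) with (1 / 500000) by field. replace (Rabs (1 - a * sin t ^ 2 - (1 - b * sin t ^ 2)) / (1 / 500000)) with (500000 * Rabs (1 - a * sin t ^ 2 - (1 - b * sin t ^ 2))) by field. lra.
Qed.

Lemma RInt_lipb (f g : R -> R) C : ex_RInt f 0 (PI/2) -> ex_RInt g 0 (PI/2) ->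
  (forall t, Rabs (f t - g t) <= C) -> Rabs (RInt f 0 (PI/2) - RInt g 0 (PI/2)) <= PI / 2 * C.
Proof.
  intros Hf Hg HC. pose proof PI_RGT_0.
  assert (E : RInt (fun t => minus (f t) (g t)) 0 (PI/2) = RInt f 0 (PI/2) - RInt g 0 (PI/2))
    by (apply (RInt_minus (V:=R_CompleteNormedModule)); auto).
  change (minus ?a ?b) with (a - b) in E.
  assert (Hex : ex_RInt (fun t => f t - g t) 0 (PI/2)) by (apply (ex_RInt_minus (V:=R_CompleteNormedModule)); auto).
  assert (H1 : RInt (fun t => f t - g t) 0 (PI/2) <= RInt (fun _ => C) 0 (PI/2)).
  { apply RInt_le; auto. lra. apply ex_RInt_const. intros. pose proof (HC x). apply Rabs_le_between in H1. lra. }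
  assert (H2 : RInt (fun _ => - C) 0 (PI/2) <= RInt (fun t => f t - g t) 0 (PI/2)).
  { apply RInt_le; auto. lra. apply ex_RInt_const. intros. pose proof (HC x). apply Rabs_le_between in H2. lra. }
  rewrite !RInt_const in H1, H2. change (scal ?a ?b) with (a * b) in H1, H2.
  apply Rabs_le. lra.
Qed.

Lemma lip_cont (f : R -> R) L x : 0 < L -> x < Mx ->
  (forall a b, a <= Mx -> b <= Mx -> Rabs (f a - f b) <= L * Rabs (a - b)) -> continuity_pt f x.
Proof.
  intros HL Hx Hf. unfold continuity_pt, continue_in, limit1_in, limit_in.
  intros eps He. exists (Rmin (eps / L) (Mx - x)). split.
  apply Rmin_pos. apply Rdiv_lt_0_compat; lra. lra.
  intros y [_ Hy]. simpl in *. unfold R_dist in *.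
  pose proof (Rmin_l (eps / L) (Mx - x)). pose proof (Rmin_r (eps / L) (Mx - x)).
  assert (y <= Mx) by (pose proof (Rle_abs (y - x)); lra).
  eapply Rle_lt_trans. apply Hf; lra.
  apply Rlt_le_trans with (L * (eps / L)). apply Rmult_lt_compat_l; lra.
  right. field. lra.
Qed.

Lemma ratio_cont x : 0 <= x < Mx -> continuity_pt ratio x.
Proof.
  intros Hx. unfold ratio. pose proof PI_RGT_0.
  apply (continuity_pt_div ellE ellK).
  - apply (lip_cont ellE (PI / 2 * 50)). lra. lra.
    intros a b Ha Hb. rewrite Rmult_assoc. apply RInt_lipb.
    apply exE; unfold Mx in Ha; lra. apply exE; unfold Mx in Hb; lra.
    intros; apply fE_lip; auto.
  - apply (lip_cont ellK (PI / 2 * 500000)). lra. lra.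
    intros a b Ha Hb. rewrite Rmult_assoc. apply RInt_lipb.
    apply exK; unfold Mx in Ha; lra. apply exK; unfold Mx in Hb; lra.
    intros; apply fK_lip; auto.
  - pose proof (ellK_pos x ltac:(unfold Mx in Hx; lra)). lra.
Qed.

Definition m1 := 999 / 1000.



Lemma E_up : ellE m1 <= 104 / 100.
Proof.
  pose proof PI_RGT_0.
  assert (HI : is_RInt (fun t => cos t + 1/25 * sin t) 0 (PI/2) (1 + 1/25)).
  { replace (1 + 1/25) with (minus ((fun t => sin t - 1/25 * cos t) (PI/2)) ((fun t => sin t - 1/25 * cos t) 0)).
    2:{ assert (Hv : (sin (PI/2) - 1/25 * cos (PI/2)) - (sin 0 - 1/25 * cos 0) = 1 + 1/25)
          by (rewrite sin_PI2, cos_PI2, sin_0, cos_0; field).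
        rewrite minusR. cbv beta. rewrite Hv. reflexivity. }
    apply (is_RInt_derive (V:=R_CompleteNormedModule) (fun t => sin t - 1/25 * cos t)).
    intros. auto_derive. exact I. ring.
    intros. apply (ex_derive_continuous (V:=R_NormedModule)). auto_derive. exact I. }
  apply (is_RInt_unique (V:=R_CompleteNormedModule)) in HI.
  apply Rle_trans with (RInt (fun t => cos t + 1/25 * sin t) 0 (PI/2)).
  - apply RInt_le. lra. apply exE. unfold m1; lra.
    apply (ex_RInt_continuous (V:=R_CompleteNormedModule)). intros.
    apply (ex_derive_continuous (V:=R_NormedModule)). auto_derive. exact I.
    intros t Ht. unfold fE.
    assert (0 <= sin t) by (apply sin_ge_0; lra).
    assert (0 <= cos t) by (apply cos_ge_0; lra).
    pose proof (sin2 t) as Hs2.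
    rewrite <- (sqrt_Rsqr (cos t + 1/25 * sin t)) by lra.
    apply sqrt_le_1_alt. unfold Rsqr, m1. simpl in *. unfold Rsqr in Hs2. nra.
  - rewrite HI. lra.
Qed.

Lemma K_low : (47/100 + m1/2) * (PI/2) / (686/1000) <= ellK m1.
Proof.
  pose proof PI_RGT_0.
  set (F := fun t => ((47/100 + m1/2) * t - m1 * sin t * cos t / 2) / (686/1000)).
  assert (HI : is_RInt (fun t => (47/100 + m1 * sin t ^ 2) / (686/1000)) 0 (PI/2) ((47/100 + m1/2) * (PI/2) / (686/1000))).
  { replace ((47/100 + m1/2) * (PI/2) / (686/1000)) with (minus (F (PI/2)) (F 0)).
    2:{ assert (Hv : F (PI/2) - F 0 = (47/100 + m1/2) * (PI/2) / (686/1000))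
          by (unfold F; rewrite sin_PI2, cos_PI2, sin_0, cos_0; field).
        rewrite minusR. cbv beta. rewrite Hv. reflexivity. }
    apply (is_RInt_derive (V:=R_CompleteNormedModule)).
    intros. unfold F. auto_derive. exact I. pose proof (sin2 x). simpl in *. unfold Rsqr in H1. apply Rmult_eq_compat_r. unfold m1. nra.
    intros. apply (ex_derive_continuous (V:=R_NormedModule)). auto_derive. exact I. }
  apply (is_RInt_unique (V:=R_CompleteNormedModule)) in HI. rewrite <- HI.
  apply RInt_le. lra.
  apply (ex_RInt_continuous (V:=R_CompleteNormedModule)). intros.
  apply (ex_derive_continuous (V:=R_NormedModule)). auto_derive. exact I.
  apply exK. unfold m1; lra.
  intros t Ht. unfold fK.
  pose proof (arg_pos m1 t ltac:(unfold m1; lra)).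
  pose proof (sqrt_sqrt (1 - m1 * sin t ^ 2) ltac:(lra)) as Hss.
  assert (0 < sqrt (1 - m1 * sin t ^ 2)) by (apply sqrt_lt_R0; lra).
  set (s := sqrt _) in *.
  replace (47/100 + m1 * sin t ^ 2) with (147/100 - s * s) by lra.
  apply (Rmult_le_reg_r (s * (686/1000))). nra.
  replace ((147/100 - s * s) / (686/1000) * (s * (686/1000))) with ((147/100 - s * s) * s) by (field).
  replace (/ s * (s * (686/1000))) with (686/1000) by (field; lra).
  assert (0 <= (s - 7/10) ^ 2 * (s + 14/10)) by (apply Rmult_le_pos; [apply pow2_ge_0 | lra]). nra.
Qed.

Lemma ratio_m1 : ratio m1 < 1/2.
Proof.
  pose proof E_up. pose proof K_low. pose proof PI2_3_2.
  unfold ratio.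
  assert (2 * (104/100) < ellK m1) by (unfold m1 in *; lra).
  apply (Rmult_lt_reg_r (ellK m1)). lra. unfold Rdiv. rewrite Rmult_assoc, Rinv_l by lra. lra.
Qed.

Lemma V0_ratio m : 0 <= m < 1 -> V0 m = 2 * ratio m - (4 - 2 * m) / 3.
Proof.
  intros Hm. pose proof (ellK_pos m Hm). pose proof PI_RGT_0.
  unfold V0, ratio. field. lra.
Qed.

Lemma ratio_inj m z : 0 <= m < 1 -> 0 <= z < 1 -> ratio m = ratio z -> m = z.
Proof.
  intros Hm Hz H. destruct (Rtotal_order m z) as [Hl|[He|Hg]]; auto.
  - pose proof (ratio_dec m z ltac:(lra) ltac:(lra)). lra.
  - pose proof (ratio_dec z m ltac:(lra) ltac:(lra)). lra.
Qed.

Theorem mainTheorem8 :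
  (forall c m V : R, c <> 0 -> 0 <= m < 1 ->
     (RInt (fun x => cnoidal c m V x) 0 (2 * PI) = 0 <-> V = V0 m)) /\
  (exists mstar : R,
     0 < mstar < 1 /\
     ellE mstar / ellK mstar = 1 / 2 /\
     (forall m : R, 0 < m < 1 -> ellE m / ellK m = 1 / 2 -> m = mstar) /\
     (forall m : R, 0 <= m < 1 -> V0 m > - (m + 1) / 3) /\
     (forall m : R, 0 <= m < 1 -> (V0 m = (2 * m - 1) / 3 <-> m = mstar)) /\
     (forall m : R, mstar < m < 1 -> V0 m < (2 * m - 1) / 3)).
Proof.
  split. { intros; apply part1; auto. }
  destruct (Ranalysis5.IVT_interv (fun m => 1/2 - ratio m) 0 m1) as [z [Hz Hfz]].
  - intros a Ha. apply continuity_pt_minus. apply continuity_pt_const. intros u v; reflexivity.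
    apply ratio_cont. unfold m1, Mx in *; lra.
  - unfold m1; lra.
  - rewrite ratio0. lra.
  - pose proof ratio_m1. lra.
  - assert (Hz0 : z <> 0) by (intro E; subst z; rewrite ratio0 in Hfz; lra).
    assert (Hr : ratio z = 1/2) by lra.
    assert (Hz1 : 0 < z < 1) by (unfold m1 in Hz; lra).
    exists z. split; [exact Hz1|]. split; [exact Hr|].
    split. { intros m Hm H. apply ratio_inj; try lra. fold (ratio m) in H. lra. }
    split. { intros; apply V0_gt; auto. }
    split.
    + intros m Hm. rewrite V0_ratio by auto. split.
      * intros H. apply ratio_inj; try lra.
      * intros ->. lra.
    + intros m Hm. rewrite V0_ratio by lra.
      pose proof (ratio_dec z m ltac:(lra) ltac:(lra)). lra.
Qed.
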